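(* Let $V=(\mathbb F_2)^n$ and $\gamma\in\mathrm{Sym}(V)$ with $0\gamma=0$. Then: (i) If $\gamma$ maps $\mathcal L(W)$ onto $\mathcal L(W')$, then for every $u\in W$, $\hat\gamma_u(V)\subseteq W'$. (ii) If $\gamma$ maps $\mathcal L(W)$ onto $\mathcal{LA}_U(W_1|W_2)$, then for every $u\in W$: $\hat\gamma_u(S)\subseteq W_1$ where $S=U\gamma^{-1}$, and $\hat\gamma_u(S')\subseteq W_2$ where $S'=(U+\bar v)\gamma^{-1}$ for an arbitrary $\bar v\in V\setminus U$. (iii) If $\gamma$ maps $\mathcal{LA}_U(W_1|W_2)$ onto $\mathcal L(W)$, then for every $u\in W_1$, $\hat\gamma_u(U)\subseteq W$; and for every $u\in W_2$, $\hat\gamma_u(U+\bar v)\subseteq W$ for an arbitrary $\bar v\in V\setminus U$. (iv) If $\gamma$ maps $\mathcal{LA}_U(W_1|W_2)$ onto $\mathcal{LA}_{U'}(W_1'|W_2')$, then, with $\bar v\in V\setminus U$ and $\bar v'\in V\setminus U'$ arbitrary: for every $u\in W_1$, $\hat\gamma_u(S)\subseteq W_1'$ where $S=U\cap (U'\gamma^{-1})$; for every $u\in W_2$, $\hat\gamma_u(S')\subseteq W_1'$ where $S'=(U+\bar v)\cap (U'\gamma^{-1})$; for every $u\in W_1$, $\hat\gamma_u(S)\subseteq W_2'$ where $S=U\cap ((U'+\bar v')\gamma^{-1})$; for every $u\in W_2$, $\hat\gamma_u(S')\subseteq W_2'$ where $S'=(U+\bar v)\cap((U'+\bar v')\ga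mma^{-1})$.
   Context: Permutations act on the right; for $X\subseteq V$, $X\gamma^{-1}$ is the preimage of $X$ under $\gamma$. The derivative of $\gamma$ in direction $u$ is $\hat\gamma_u(x)=(x+u)\gamma+x\gamma$, and $\hat\gamma_u(S)=\{\hat\gamma_u(s):s\in S\}$. A permutation maps a partition $\mathcal A$ onto $\mathcal B$ if the images of the blocks of $\mathcal A$ are exactly the blocks of $\mathcal B$. For a subspace $W$, $\mathcal L(W)=\{W+v:v\in V\}$. For a subspace $U$ of dimension $n-1$ and subspaces $W_1,W_2\subseteq U$, $\mathcal{LA}_U(W_1|W_2)=\{W_1+v:v\in U\}\cup\{(W_2+\bar v)+v:v\in U\}$ for any $\bar v\in V\setminus U$ (independent of the choice). *)

(* Defs.v *)
From HB Require Import structures.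
From mathcomp Require Import all_boot all_order all_algebra all_fingroup.
Set Implicit Arguments. Unset Strict Implicit. Unset Printing Implicit Defensive.
Import GRing.Theory.
Local Open Scope ring_scope.

Notation V n := 'rV['F_2]_n.

(* Permutations act on the right: x gamma is written (g x) for g : {perm V n}. *)

Definition cosetv n (W : {vspace V n}) (v : V n) : {set V n} :=
  [set w + v | w in W].

Definition vset n (W : {vspace V n}) : {set V n} := [set x | x \in W].

Definition Lpart n (W : {vspace V n}) : {set {set V n}} :=
  [set cosetv W v | v : V n].

Definition LApart n (U W1 W2 : {vspace V n}) (vbar : V n) : {set {set V n}} :=
  [set cosetv W1 v | v in U] :|: [set cosetv W2 (vbar + v) | v in U].

Definition maps_onto n (g : {perm V n}) (A B : {set {set V n}}) : Prop :=
  [set g @: X | X : {set V n} in A] = B.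

Definition preimg n (g : {perm V n}) (X : {set V n}) : {set V n} :=
  [set x | g x \in X].

Definition deriv n (g : {perm V n}) (u x : V n) : V n := g (x + u) + g x.

Definition deriv_img n (g : {perm V n}) (u : V n) (S : {set V n}) : {set V n} :=
  [set deriv g u x | x in S].

Definition hyperplane n (U : {vspace V n}) : Prop := (\dim U).+1 = n.

(* Main.v *)
Require Import Defs.
From HB Require Import structures.
From mathcomp Require Import all_boot all_order all_algebra all_fingroup.
Set Implicit Arguments. Unset Strict Implicit. Unset Printing Implicit Defensive.
Import GRing.Theory.
Local Open Scope ring_scope.
Lemma F2_add (k : 'F_2) : k + k = 0.
Proof. by case: k => [[|[|k]] Hk] //; apply/val_inj. Qed.
Lemma addvv n (x : V n) : x + x = 0.
Proof. by apply/rowP => i; rewrite !mxE F2_add. Qed.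
Lemma F2_cases (k : 'F_2) : k = 0 \/ k = 1.
Proof. by case: k => [[|[|k]] Hk] //; [left|right]; apply/val_inj. Qed.

Lemma line_cases n (a v : V n) : v \in <[a]>%VS -> v = 0 \/ v = a.
Proof.
move/vlineP=> [k ->]; case: (F2_cases k) => ->; [left; exact: scale0r | right; exact: scale1r].
Qed.

Lemma hyp_add n (U : {vspace V n}) a b :
  hyperplane U -> a \notin U -> b \notin U -> a + b \in U.
Proof.
move=> hU aU bU.
set S := (U + <[a]>)%VS.
have sUS : (U <= S)%VS by apply: addvSl.
have aS : a \in S by rewrite -[a]add0r; apply: memv_add; [apply: mem0v|apply: memv_line].
have : (\dim U < \dim S)%N.
  rewrite ltn_neqAle (dimv_leqif_sup sUS).
  rewrite (dimvS sUS) andbT; apply/negP => /subvP /(_ a aS); by rewrite (negbTE aU).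
have : (\dim S <= \dim (fullv : {vspace V n}))%N by apply: dimvS; apply: subvf.
have dimF : \dim (fullv : {vspace V n}) = (\dim U).+1 by rewrite dimvf /dim /= mul1n hU.
rewrite dimF => hS1 hS2.
have eqS : S = fullv.
  apply/eqP; rewrite -(dimv_leqif_eq (subvf S)) dimF.
  by apply/eqP/anti_leq; rewrite hS1.
have : b \in S by rewrite eqS memvf.
move=> /memv_addP [w wU [v /line_cases [->|->] Hb]]; subst b.
  by move: bU; rewrite addr0 wU.
by rewrite addrCA addvv addr0.
Qed.

Lemma mem_cosetv n (W : {vspace V n}) v x : (x \in cosetv W v) = (x + v \in W).
Proof.
apply/imsetP/idP => [[w Hw ->]|H]; first by rewrite -addrA addvv addr0.
by exists (x + v) => //; rewrite -addrA addvv addr0.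
Qed.

Lemma addvACA n (a b v : V n) : (a + v) + (b + v) = a + b.
Proof. by rewrite addrACA addvv addr0. Qed.

Lemma core n (g : {perm V n}) A B (W' : {vspace V n}) X x u :
  maps_onto g A B -> X \in A -> x \in X -> x + u \in X ->
  (forall Y, Y \in B -> g x \in Y -> g (x + u) \in Y -> g x + g (x + u) \in W') ->
  Defs.deriv g u x \in W'.
Proof.
move=> <- XA xX yX H; rewrite /Defs.deriv addrC; apply: (H (g @: X)).
- by apply: imset_f.
- by apply: imset_f.
- by apply: imset_f.
Qed.

Lemma Lpart_diff n (W : {vspace V n}) Y a b :
  Y \in Lpart W -> a \in Y -> b \in Y -> a + b \in W.
Proof.
case/imsetP => v _ ->; rewrite !mem_cosetv => ha hb.
by rewrite -(addvACA a b v) memvD.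
Qed.

Lemma LA_diff1 n (U W1 W2 : {vspace V n}) vb Y a b :
  (W1 <= U)%VS -> (W2 <= U)%VS -> vb \notin U ->
  Y \in LApart U W1 W2 vb -> a \in Y -> b \in Y -> a \in U -> a + b \in W1.
Proof.
move=> s1 s2 vbU /setUP [] /imsetP [v vU ->]; rewrite !mem_cosetv => ha hb aU.
  by rewrite -(addvACA a b v) memvD.
case/negP: vbU.
have h : a + (vb + v) \in U by apply: (subvP s2).
have -> : vb = (a + (vb + v)) + (a + v).
  by rewrite addrACA addvv add0r -addrA addvv addr0.
by rewrite memvD // memvD.
Qed.

Lemma LA_diff2 n (U W1 W2 : {vspace V n}) vb Y a b :
  (W1 <= U)%VS -> (W2 <= U)%VS -> vb \notin U ->
  Y \in LApart U W1 W2 vb -> a \in Y -> b \in Y -> a \notin U -> a + b \in W2.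
Proof.
move=> s1 s2 vbU /setUP [] /imsetP [v vU ->]; rewrite !mem_cosetv => ha hb aU.
  case/negP: aU.
  have h : a + v \in U by apply: (subvP s1).
  have -> : a = (a + v) + v by rewrite -addrA addvv addr0.
  by rewrite memvD.
by rewrite -(addvACA a b (vb + v)) memvD.
Qed.

Lemma Lpart_src n (W : {vspace V n}) x u :
  u \in W -> [/\ cosetv W x \in Lpart W, x \in cosetv W x & x + u \in cosetv W x].
Proof.
move=> uW; split.
- by apply: imset_f.
- by rewrite mem_cosetv addvv mem0v.
- by rewrite mem_cosetv addrAC addvv add0r.
Qed.

Lemma LA_src1 n (U W1 W2 : {vspace V n}) vb x u :
  x \in U -> u \in W1 ->
  [/\ cosetv W1 x \in LApart U W1 W2 vb, x \in cosetv W1 x & x + u \in cosetv W1 x].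
Proof.
move=> xU uW; split.
- by apply/setUP; left; apply: imset_f.
- by rewrite mem_cosetv addvv mem0v.
- by rewrite mem_cosetv addrAC addvv add0r.
Qed.

Lemma LA_src2 n (U W1 W2 : {vspace V n}) vb x u :
  hyperplane U -> vb \notin U -> x \notin U -> u \in W2 ->
  [/\ cosetv W2 (vb + (vb + x)) \in LApart U W1 W2 vb,
      x \in cosetv W2 (vb + (vb + x)) & x + u \in cosetv W2 (vb + (vb + x))].
Proof.
move=> hU vbU xU uW; have e : vb + (vb + x) = x by rewrite addrA addvv add0r.
split.
- by apply/setUP; right; apply: imset_f; apply: hyp_add.
- by rewrite e mem_cosetv addvv mem0v.
- by rewrite e mem_cosetv addrAC addvv add0r.
Qed.

Lemma coset_notin n (U : {vspace V n}) vb x :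
  vb \notin U -> x \in cosetv U vb -> x \notin U.
Proof.
rewrite mem_cosetv => vbU h; apply/negP => xU; case/negP: vbU.
have -> : vb = x + (x + vb) by rewrite addrA addvv add0r.
by rewrite memvD.
Qed.

Theorem lemma3p7 (n : nat) (g : {perm V n}) (g0 : g 0 = 0) :
  (* (i) *)
  (forall W W' : {vspace V n},
     maps_onto g (Lpart W) (Lpart W') ->
     forall u, u \in W -> {subset deriv_img g u setT <= W'}) /\
  (* (ii) *)
  (forall (W U W1 W2 : {vspace V n}) (vbar0 : V n),
     hyperplane U -> (W1 <= U)%VS -> (W2 <= U)%VS -> vbar0 \notin U ->
     maps_onto g (Lpart W) (LApart U W1 W2 vbar0) ->
     forall u, u \in W ->
       {subset deriv_img g u (preimg g (vset U)) <= W1} /\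
       (forall vbar : V n, vbar \notin U ->
          {subset deriv_img g u (preimg g (cosetv U vbar)) <= W2})) /\
  (* (iii) *)
  (forall (U W1 W2 W : {vspace V n}) (vbar0 : V n),
     hyperplane U -> (W1 <= U)%VS -> (W2 <= U)%VS -> vbar0 \notin U ->
     maps_onto g (LApart U W1 W2 vbar0) (Lpart W) ->
     (forall u, u \in W1 -> {subset deriv_img g u (vset U) <= W}) /\
     (forall u, u \in W2 -> forall vbar : V n, vbar \notin U ->
        {subset deriv_img g u (cosetv U vbar) <= W})) /\
  (* (iv) *)
  (forall (U W1 W2 U' W1' W2' : {vspace V n}) (vbar0 vbar0' : V n),
     hyperplane U -> (W1 <= U)%VS -> (W2 <= U)%VS -> vbar0 \notin U ->
     hyperplane U' -> (W1' <= U')%VS -> (W2' <= U')%VS -> vbar0' \notin U' ->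
     maps_onto g (LApart U W1 W2 vbar0) (LApart U' W1' W2' vbar0') ->
     forall (vbar vbar' : V n), vbar \notin U -> vbar' \notin U' ->
     (forall u, u \in W1 ->
        {subset deriv_img g u (vset U :&: preimg g (vset U')) <= W1'}) /\
     (forall u, u \in W2 ->
        {subset deriv_img g u (cosetv U vbar :&: preimg g (vset U')) <= W1'}) /\
     (forall u, u \in W1 ->
        {subset deriv_img g u (vset U :&: preimg g (cosetv U' vbar')) <= W2'}) /\
     (forall u, u \in W2 ->
        {subset deriv_img g u (cosetv U vbar :&: preimg g (cosetv U' vbar')) <= W2'})).
Proof.
split; [|split; [|split]].
- move=> W W' hm u uW y /imsetP [x _ ->].
  case: (Lpart_src x uW) => XA xX yX.
  apply: (core hm XA xX yX) => Y YB; exact: Lpart_diff.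
- move=> W U W1 W2 vb0 hU s1 s2 vb0U hm u uW; split.
  + move=> y /imsetP [x]; rewrite inE inE => gxU ->.
    case: (Lpart_src x uW) => XA xX yX.
    apply: (core hm XA xX yX) => Y YB ha hb; exact: (LA_diff1 s1 s2 vb0U YB ha hb gxU).
  + move=> vb vbU y /imsetP [x]; rewrite inE => gxU ->.
    case: (Lpart_src x uW) => XA xX yX.
    apply: (core hm XA xX yX) => Y YB ha hb.
    exact: (LA_diff2 s1 s2 vb0U YB ha hb (coset_notin vbU gxU)).
- move=> U W1 W2 W vb0 hU s1 s2 vb0U hm; split.
  + move=> u uW y /imsetP [x]; rewrite inE => xU ->.
    case: (LA_src1 W2 vb0 xU uW) => XA xX yX.
    apply: (core hm XA xX yX) => Y YB; exact: Lpart_diff.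
  + move=> u uW vb vbU y /imsetP [x xc ->].
    case: (LA_src2 W1 hU vb0U (coset_notin vbU xc) uW) => XA xX yX.
    apply: (core hm XA xX yX) => Y YB; exact: Lpart_diff.
- move=> U W1 W2 U' W1' W2' vb0 vb0' hU s1 s2 vb0U hU' s1' s2' vb0U' hm vb vb' vbU vbU'.
  split; [|split; [|split]].
  + move=> u uW y /imsetP [x /setIP [xU gx] ->]; move: xU gx; rewrite !inE => xU gxU.
    case: (LA_src1 W2 vb0 xU uW) => XA xX yX.
    apply: (core hm XA xX yX) => Y YB ha hb; exact: (LA_diff1 s1' s2' vb0U' YB ha hb gxU).
  + move=> u uW y /imsetP [x /setIP [xc gx] ->]; move: gx; rewrite !inE => gxU.
    case: (LA_src2 W1 hU vb0U (coset_notin vbU xc) uW) => XA xX yX.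
    apply: (core hm XA xX yX) => Y YB ha hb; exact: (LA_diff1 s1' s2' vb0U' YB ha hb gxU).
  + move=> u uW y /imsetP [x /setIP [xU gx] ->]; move: xU gx; rewrite !inE => xU gxU.
    case: (LA_src1 W2 vb0 xU uW) => XA xX yX.
    apply: (core hm XA xX yX) => Y YB ha hb.
    exact: (LA_diff2 s1' s2' vb0U' YB ha hb (coset_notin vbU' gxU)).
  + move=> u uW y /imsetP [x /setIP [xc gx] ->]; move: gx; rewrite !inE => gxU.
    case: (LA_src2 W1 hU vb0U (coset_notin vbU xc) uW) => XA xX yX.
    apply: (core hm XA xX yX) => Y YB ha hb.
    exact: (LA_diff2 s1' s2' vb0U' YB ha hb (coset_notin vbU' gxU)).
Qed.
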